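(* Let $S$ be a right zero semigroup or a left zero semigroup, and let $\omega$ be a weight on $S$. Then the Beurling algebra $\ell^{1}(S,\omega)$ is biprojective.
   Context: A semigroup $S$ is a left zero semigroup if $st=s$ for all $s,t\in S$, and a right zero semigroup if $st=t$ for all $s,t\in S$. A weight on a (discrete) semigroup $S$ is a function $\omega:S\to(0,\infty)$ with $\omega(st)\le\omega(s)\omega(t)$ for all $s,t\in S$. The Beurling algebra $\ell^{1}(S,\omega)$ is the Banach space of functions $f=\sum_{s\in S}f(s)\delta_s$ with $\|f\|_\omega=\sum_{s\in S}|f(s)|\omega(s)<\infty$, with convolution product determined by $\delta_s*\delta_t=\delta_{st}$. A Banach algebra $\mathcal{A}$ is biprojective if there is a bounded $\mathcal{A}$-bimodule homomorphism $\rho:\mathcal{A}\to\mathcal{A}\hat{\otimes}\mathcal{A}$ with $\pi\circ\rho=I_{\mathcal{A}}$, where $\pi:\mathcal{A}\hat{\otimes}\mathcal{A}\to\mathcal{A}$, $\pi(a\otimes b)=ab$, is the multiplication map and $\hat{\otimes}$ is the projective tensor product. *)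

(* Defs.v *)
From HB Require Import structures.
From mathcomp Require Import all_boot all_order all_algebra.
From mathcomp Require Import finmap complex.
From mathcomp Require Import all_classical all_reals all_analysis.
Import Order.TTheory GRing.Theory Num.Theory numFieldNormedType.Exports.

Set Implicit Arguments.
Unset Strict Implicit.
Unset Printing Implicit Defensive.

Local Open Scope classical_set_scope.
Local Open Scope ring_scope.
Local Open Scope complex_scope.

(* Unordered (net) sums over an arbitrary index type: the limit of the finite *)
(* partial sums along the filter of finite subsets ordered by inclusion.      *)

Definition totally {I : choiceType} : set_system {fset I} :=
  filter_from setT (fun A => [set B | fsubset A B]).

Instance totally_filter {I : choiceType} : ProperFilter (@totally I).
Proof.
eapply filter_from_proper; last by move=> A _; exists A; rewrite /= fsubset_refl.
apply: filter_fromT_filter; first by exists fset0.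
by move=> A B /=; exists (A `|` B)%fset => P /=; rewrite fsubUset => /andP[].
Qed.

Definition cplx (R : realType) : numClosedFieldType := (R[i] : numClosedFieldType).

Definition partial_sum {I : choiceType} {R : realType}
  (x : I -> cplx R) (A : {fset I}) : cplx R := \sum_(i <- A) x i.

(* sum of a family of complex numbers (meaningful for absolutely summable   *)
(* families, which is the only case in which it is used below)              *)
Definition csum {I : choiceType} {R : realType} (x : I -> cplx R) : cplx R :=
  lim (partial_sum x @ totally).

Definition cabs {R : realType} (z : cplx R) : R :=
  Num.sqrt (complex.Re z ^+ 2 + complex.Im z ^+ 2).

Definition left_zero_semigroup {S : Type} (op : S -> S -> S) :=
  forall s t, op s t = s.
Definition right_zero_semigroup {S : Type} (op : S -> S -> S) :=
  forall s t, op s t = t.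

Definition is_weight {R : realType} {S : Type} (op : S -> S -> S) (w : S -> R) :=
  (forall s, 0 < w s) /\ (forall s t, w (op s t) <= w s * w t).

Definition l1norm {R : realType} {T : choiceType} (w : T -> R)
  (f : T -> cplx R) : \bar R :=
  (\esum_(s in [set: T]) (cabs (f s) * w s)%:E)%E.

Definition in_l1 {R : realType} {T : choiceType} (w : T -> R)
  (f : T -> cplx R) : Prop := (l1norm w f < +oo)%E.

(* convolution product on l^1(S, w): delta_s * delta_t = delta_(st) *)
Definition conv {R : realType} {S : choiceType} (op : S -> S -> S)
  (f g : S -> cplx R) : S -> cplx R :=
  fun u => csum (fun p : S * S => if op p.1 p.2 == u then f p.1 * g p.2 else 0).

(* The projective tensor product l^1(S,w) ^(x) l^1(S,w), realised as          *)
(* l^1(S x S, w x w) via the canonical isometric isomorphism                  *)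
(* delta_s (x) delta_t <-> delta_(s,t), with its bimodule actions             *)
(*   a . (b (x) c) = (a * b) (x) c,    (b (x) c) . a = b (x) (c * a),          *)
(* and the multiplication map pi (b (x) c) = b * c.                          *)

Definition tweight {R : realType} {S : Type} (w : S -> R) : S * S -> R :=
  fun p => w p.1 * w p.2.

Definition lact {R : realType} {S : choiceType} (op : S -> S -> S)
  (a : S -> cplx R) (F : S * S -> cplx R) : S * S -> cplx R :=
  fun uv => csum (fun p : S * S =>
    if op p.1 p.2 == uv.1 then a p.1 * F (p.2, uv.2) else 0).

Definition ract {R : realType} {S : choiceType} (op : S -> S -> S)
  (F : S * S -> cplx R) (a : S -> cplx R) : S * S -> cplx R :=
  fun uv => csum (fun p : S * S =>
    if op p.1 p.2 == uv.2 then F (uv.1, p.1) * a p.2 else 0).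

Definition tmult {R : realType} {S : choiceType} (op : S -> S -> S)
  (F : S * S -> cplx R) : S -> cplx R :=
  fun u => csum (fun p : S * S => if op p.1 p.2 == u then F p else 0).

Definition beurling_biprojective {R : realType} {S : choiceType}
  (op : S -> S -> S) (w : S -> R) : Prop :=
  exists rho : (S -> cplx R) -> (S * S -> cplx R),
    [/\
        forall f, in_l1 w f -> in_l1 (tweight w) (rho f),
        forall (c : cplx R) f g, in_l1 w f -> in_l1 w g ->
          rho (fun s => c * f s + g s) = (fun p => c * rho f p + rho g p),
        exists M : R, forall f, in_l1 w f ->
          (l1norm (tweight w) (rho f) <= M%:E * l1norm w f)%E,
        forall a f, in_l1 w a -> in_l1 w f ->
          rho (conv op a f) = lact op a (rho f) /\
          rho (conv op f a) = ract op (rho f) a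
      &
        forall f, in_l1 w f -> tmult op (rho f) = f].

(* Main.v *)
Require Import Defs.
From HB Require Import structures.
From mathcomp Require Import all_boot all_order all_algebra.
From mathcomp Require Import finmap complex.
From mathcomp Require Import all_classical all_reals all_analysis.
Import Order.TTheory GRing.Theory Num.Theory numFieldNormedType.Exports.
Local Open Scope classical_set_scope.
Local Open Scope ring_scope.
Lemma csum_single {I : choiceType} {R : realType} (x : I -> cplx R) (a : I) :
  (forall i, i != a -> x i = 0) -> csum x = x a.
Proof.
move=> x0; rewrite /csum; apply: norm_lim_near_cst.
exists [fset a]%fset => // B /= sub.
have aB : a \in B by apply: (fsubsetP sub); rewrite inE.
rewrite /partial_sum (bigD1_seq a) //= big1 ?addr0 // => i /x0 //.
Qed.
Lemma csum_perm {I : choiceType} {R : realType} (x : I -> cplx R) (e e' : I -> I) :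
  cancel e e' -> cancel e' e -> csum (x \o e) = csum x.
Proof.
move=> ee' e'e; rewrite /csum.
pose im (A : {fset I}) := (e @` A)%fset.
have -> : partial_sum (x \o e) = partial_sum x \o im.
  apply/funext => A; rewrite /= /partial_sum /im big_imfset //=.
  by move=> i j _ _; exact: (can_inj ee').
change (lim (partial_sum x @ (im @ totally)) = lim (partial_sum x @ totally)).
have -> : im @ totally = totally.
  apply/funext => P; apply/propext; split.
  - case=> B _ /= HB; exists (im B) => // C /= sub.
    have -> : C = im [fset e' c | c in C]%fset.
      apply/fsetP => c; apply/idP/imfsetP => [cC|[/= d /imfsetP[/= c' c'C ->] ->]].
        by exists (e' c); [apply/imfsetP; exists c|rewrite e'e].
      by rewrite e'e.
    apply: HB => /=; apply/fsubsetP => b bB.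
    apply/imfsetP; exists (e b); first by apply: (fsubsetP sub); apply/imfsetP; exists b.
    by rewrite ee'.
  - case=> B _ /= HB; exists [fset e' b | b in B]%fset => // C /= sub.
    apply: HB => /=; apply/fsubsetP => b bB.
    apply/imfsetP; exists (e' b); last by rewrite e'e.
    by apply: (fsubsetP sub); apply/imfsetP; exists b.
by [].
Qed.
Lemma cabs0 {R : realType} : cabs (0 : cplx R) = 0.
Proof. by rewrite /cabs /= expr0n /= addr0 sqrtr0. Qed.

Lemma cabs_ge0 {R : realType} (z : cplx R) : 0 <= cabs z.
Proof. exact: sqrtr_ge0. Qed.

Lemma esum_scale_le {R : realType} {T : choiceType} (c : R) (g : T -> R) :
  0 <= c -> (forall t, 0 <= g t) ->
  (\esum_(t in [set: T]) (c * g t)%:E <= c%:E * \esum_(t in [set: T]) (g t)%:E)%E.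
Proof.
move=> c0 g0; apply: ge_ereal_sup => _ [X [finX _] <-] /=.
under eq_fsbigr do rewrite EFinM.
rewrite -ge0_mule_fsumr; last by move=> i; rewrite lee_fin.
apply: lee_wpmul2l; first by rewrite lee_fin.
by apply: ereal_sup_ubound; exists X.
Qed.

Lemma l1_bound {R : realType} {T : choiceType} (w : T -> R) (F : T * T -> cplx R)
  (emb : T -> T * T) (g : T -> cplx R) (c : R) :
  (forall t, 0 < w t) -> injective emb ->
  (forall p, ~ range emb p -> F p = 0) -> (forall t, F (emb t) = g t) ->
  (forall t, tweight w (emb t) = c * w t) -> 0 <= c ->
  (l1norm (tweight w) F <= c%:E * l1norm w g)%E.
Proof.
move=> w0 embi F0 Fg tw c0.
have tw0 p : 0 <= tweight w p by rewrite /tweight mulr_ge0 // ltW.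
rewrite /l1norm (esumID (range emb)); last first.
  by move=> p _; rewrite lee_fin mulr_ge0 // cabs_ge0.
rewrite [X in (_ + X)%E]esum1; last first.
  by move=> p [_ /F0 ->]; rewrite cabs0 mul0r.
rewrite adde0 setTI esum_image; last by move=> x y _ _; apply: embi.
under eq_esum do rewrite Fg tw mulrCA.
apply: esum_scale_le => // t; rewrite mulr_ge0 // ?cabs_ge0 // ltW //.
Qed.

Lemma csum_zero {I : choiceType} {R : realType} (x : I -> cplx R) (a : I) :
  (forall i, x i = 0) -> csum x = 0.
Proof. by move=> x0; rewrite (@csum_single _ _ x a) // => i _. Qed.

Definition sw {S : choiceType} (a b x : S) := if x == a then b else if x == b then a else x.

Lemma swK {S : choiceType} (a b : S) : cancel (sw a b) (sw a b).
Proof.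
move=> x; rewrite /sw.
case: (eqVneq x a) => [xa|xa]; first by subst x; rewrite eqxx; case: (eqVneq b a).
case: (eqVneq x b) => [xb|xb]; first by subst x; rewrite eqxx.
by rewrite (negPf xa) (negPf xb).
Qed.

Lemma sw_eq {S : choiceType} (a b x : S) : (sw a b x == b) = (x == a).
Proof.
rewrite /sw; case: (eqVneq x a) => [xa|xa]; first by rewrite !eqxx.
case: (eqVneq x b) => [xb|xb]; last by rewrite (negPf xb).
by subst x; rewrite eq_sym (negPf xa).
Qed.

Lemma sw_a {S : choiceType} (a b : S) : sw a b a = b.
Proof. by rewrite /sw eqxx. Qed.

Lemma fin_bound {R : realType} (x y : \bar R) (c : R) :
  0 <= c -> (0 <= y)%E -> (y < +oo)%E -> (x <= c%:E * y)%E -> (x < +oo)%E.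
Proof.
move=> c0 y0 yoo xle; apply: le_lt_trans xle _.
by apply: lte_mul_pinfty; rewrite ?lee_fin.
Qed.

Theorem proposition2p1 (R : realType) (S : choiceType) (op : S -> S -> S)
  (w : S -> R) :
  (right_zero_semigroup op \/ left_zero_semigroup op) ->
  is_weight op w ->
  beurling_biprojective op w.
Proof.
move=> hop [w0 _].
have l1ge0 f : (0 <= l1norm w f)%E.
  by apply: esum_ge0 => s _; rewrite lee_fin mulr_ge0 ?cabs_ge0 // ltW.
case: (pselect (exists s : S, True)) => [[s0 _]|noS]; last first.
  have nS (s : S) : False by apply: noS; exists s.
  exists (fun _ _ => 0); split.
  - move=> f _; rewrite /in_l1 /l1norm esum1 ?ltry // => p _.
    by rewrite cabs0 mul0r.
  - by move=> c f g _ _; apply/funext => p; case: (nS p.1).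
  - exists 0 => f _; rewrite mul0e /l1norm esum1 // => p _.
    by rewrite cabs0 mul0r.
  - by move=> a f _ _; split; apply/funext => p; case: (nS p.1).
  - by move=> f _; apply/funext => p; case: (nS p).
case: hop => [hR|hL].
- pose rho (f : S -> cplx R) := fun p : S * S => if p.1 == s0 then f p.2 else 0.
  have bnd f : (l1norm (tweight w) (rho f) <= (w s0)%:E * l1norm w f)%E.
    apply: (@l1_bound _ _ w (rho f) (fun t => (s0, t)) f) => //.
    - by move=> x y [].
    - move=> [p1 p2] np; rewrite /rho /=; case: eqP => // e.
      by case: np; exists p2; rewrite ?e.
    - by move=> t; rewrite /rho /= eqxx.
    - by rewrite ltW.
  exists rho; split.
  - move=> f ff; have := fin_bound _ _ _ (ltW (w0 s0)) (l1ge0 f) ff (bnd f). exact.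
  - move=> c f g _ _; apply/funext => p; rewrite /rho.
    by case: ifP => _; rewrite ?mulr0 ?addr0.
  - by exists (w s0) => f _; apply: bnd.
  - move=> a f _ _; split; apply/funext => -[u v]; rewrite /rho /lact /ract /Defs.conv /=.
    + case: (eqVneq u s0) => [->|us0]; last first.
        symmetry; apply: (csum_zero _ (u, v)) => p; case: eqP => // e.
        by rewrite hR in e; rewrite e (negPf us0) mulr0.
      rewrite -(@csum_perm _ _ _ (fun p => (p.1, sw s0 v p.2)) (fun p => (p.1, sw s0 v p.2))); last 2 first.
        by move=> [x y]; rewrite /= swK.
        by move=> [x y]; rewrite /= swK.
      congr csum; apply/funext => -[x y]; rewrite /= !hR sw_eq.
      by case: eqP => // ->; rewrite sw_a ?eqxx.
    + case: (eqVneq u s0) => _; first by [].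
      symmetry; apply: (csum_zero _ (u, v)) => p; case: ifP => //; by rewrite mul0r.
  - move=> f _; apply/funext => u; rewrite /tmult /rho.
    rewrite (@csum_single _ _ _ (s0, u)) /= ?hR ?eqxx //.
    move=> [x y] /=; rewrite hR; case: (eqVneq y u) => // ->.
    by case: (eqVneq x s0) => // -> ; rewrite eqxx.
- pose rho (f : S -> cplx R) := fun p : S * S => if p.2 == s0 then f p.1 else 0.
  have bnd f : (l1norm (tweight w) (rho f) <= (w s0)%:E * l1norm w f)%E.
    apply: (@l1_bound _ _ w (rho f) (fun t => (t, s0)) f) => //.
    - by move=> x y [].
    - move=> [p1 p2] np; rewrite /rho /=; case: eqP => // e.
      by case: np; exists p1; rewrite ?e.
    - by move=> t; rewrite /rho /= eqxx.
    - by move=> t; rewrite /tweight /= mulrC.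
    - by rewrite ltW.
  exists rho; split.
  - move=> f ff; have := fin_bound _ _ _ (ltW (w0 s0)) (l1ge0 f) ff (bnd f). exact.
  - move=> c f g _ _; apply/funext => p; rewrite /rho.
    by case: ifP => _; rewrite ?mulr0 ?addr0.
  - by exists (w s0) => f _; apply: bnd.
  - move=> a f _ _; split; apply/funext => -[u v]; rewrite /rho /lact /ract /Defs.conv /=.
    + case: (eqVneq v s0) => _; first by [].
      symmetry; apply: (csum_zero _ (u, v)) => p; case: ifP => //; by rewrite mulr0.
    + case: (eqVneq v s0) => [->|vs0]; last first.
        symmetry; apply: (csum_zero _ (u, v)) => p; case: eqP => // e.
        by rewrite hL in e; rewrite e (negPf vs0) mul0r.
      rewrite -(@csum_perm _ _ _ (fun p => (sw s0 u p.1, p.2)) (fun p => (sw s0 u p.1, p.2))); last 2 first.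
        by move=> [x y]; rewrite /= swK.
        by move=> [x y]; rewrite /= swK.
      congr csum; apply/funext => -[x y]; rewrite /= !hL sw_eq.
      by case: eqP => // ->; rewrite sw_a ?eqxx.
  - move=> f _; apply/funext => u; rewrite /tmult /rho.
    rewrite (@csum_single _ _ _ (u, s0)) /= ?hL ?eqxx //.
    move=> [x y] /=; rewrite hL; case: (eqVneq x u) => // ->.
    by case: (eqVneq y s0) => // -> ; rewrite eqxx.
Qed.
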